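(* Suppose that $X$ is a finite-dimensional real Hilbert space and that $U,V$ are linear subspaces of $X$. Then \[ P_{U+V}=\mathrm{Id}-2P_{U^\perp}(P_{U^\perp}+P_{V^\perp})^\dagger P_{V^\perp}=\mathrm{Id}-2(\mathrm{Id}-P_U)\big(2\mathrm{Id}-P_U-P_V\big)^\dagger(\mathrm{Id}-P_V). \]
   Context: $P_S$ denotes the orthogonal projection onto $S$, and $A^\dagger$ denotes the Moore-Penrose inverse of the linear map $A$. *)

(* Defs.v *)
(* X = R^n with the standard inner product <x,y> = x *m y^T,
   vectors are row vectors 'rV[R]_n, linear maps are matrices acting on the
   right (x |-> x *m A), subspaces are row spaces of square matrices (mxalgebra). *)
From HB Require Import structures.
From mathcomp Require Import all_boot all_order all_algebra.
From mathcomp Require Import reals.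
Set Implicit Arguments. Unset Strict Implicit. Unset Printing Implicit Defensive.
Import Order.TTheory GRing.Theory Num.Theory.
Local Open Scope ring_scope.

Definition orthc (R : realType) (n : nat) (S : 'M[R]_n) : 'M[R]_n := kermx S^T.

Definition is_orth_proj (R : realType) (n : nat) (S P : 'M[R]_n) : Prop :=
  forall x : 'rV[R]_n, (x *m P <= S)%MS /\ (x - x *m P) *m S^T = 0.

Definition is_MP_inverse (R : realType) (n : nat) (A M : 'M[R]_n) : Prop :=
  [/\ A *m M *m A = A, M *m A *m M = M, (A *m M)^T = A *m M & (M *m A)^T = M *m A].

(* Main.v *)
Require Import Defs.
From HB Require Import structures.
From mathcomp Require Import all_boot all_order all_algebra.
From mathcomp Require Import reals.
Import Order.TTheory GRing.Theory Num.Theory.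
Local Open Scope ring_scope.

Section Aux.
Variables (R : realType) (n : nat).

Lemma sqr_sum0 m p (C D : 'M[R]_(m,p)) : C *m C^T + D *m D^T = 0 -> C = 0.
Proof.
move=> H; apply/matrixP => i j; rewrite mxE.
move/matrixP/(_ i i): H; rewrite !mxE.
under eq_bigr do rewrite mxE. under [X in _ + X = _]eq_bigr do rewrite mxE.
move=> /eqP; rewrite paddr_eq0; first last.
- by apply: sumr_ge0 => k _; rewrite -expr2 sqr_ge0.
- by apply: sumr_ge0 => k _; rewrite -expr2 sqr_ge0.
case/andP => /eqP h _.
have := @psumr_eq0P _ _ xpredT (fun k => C i k ^+ 2) (fun k _ => sqr_ge0 _) _ j isT.
rewrite expr2 => hh; apply/eqP; rewrite -[_ == 0]orbb -mulf_eq0; apply/eqP.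
apply: hh; rewrite -[X in _ = X]h; apply: eq_bigr => k _; by rewrite expr2.
Qed.

Lemma sqr0 m p (C : 'M[R]_(m,p)) : C *m C^T = 0 -> C = 0.
Proof. by move=> h; apply: (@sqr_sum0 _ _ C 0); rewrite mul0mx addr0. Qed.

Lemma proj_mx {S P : 'M[R]_n} : is_orth_proj S P ->
  forall m (X : 'M_(m,n)), (X *m P <= S)%MS /\ (X - X *m P) *m S^T = 0.
Proof.
move=> H m X; split.
  by apply/row_subP => i; rewrite row_mul; exact: (H (row i X)).1.
apply/row_matrixP => i; rewrite row_mul row0 linearB /= row_mul.
exact: (H (row i X)).2.
Qed.

Lemma in_perp0 m (S : 'M[R]_n) (Y : 'M_(m,n)) : (Y <= S)%MS -> Y *m S^T = 0 -> Y = 0.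
Proof.
move=> hY h; apply: sqr0; move/submxP: hY => [D eD].
have e : S *m Y^T = 0 by rewrite -[S in S *m _]trmxK -trmx_mul h trmx0.
by rewrite {1}eD -mulmxA e mulmx0.
Qed.

Lemma proj_sym {S P : 'M[R]_n} : is_orth_proj S P -> P^T = P.
Proof.
move=> H; have [h1 h2] := proj_mx H _ 1%:M; rewrite mul1mx in h1 h2.
move/submxP: h1 => [D eD].
have e : P *m (1%:M - P)^T = 0.
  rewrite {1}eD -mulmxA.
  have -> : S *m (1%:M - P)^T = ((1%:M - P) *m S^T)^T by rewrite trmx_mul trmxK.
  by rewrite h2 trmx0 mulmx0.
have e2 : P = P *m P^T.
  by apply/eqP; rewrite -subr_eq0; move: e; rewrite linearB /= trmx1 mulmxBr mulmx1 => ->.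
by rewrite e2 trmx_mul trmxK.
Qed.

Lemma proj_idem {S P : 'M[R]_n} : is_orth_proj S P -> P *m P = P.
Proof.
move=> H; have [h1 h2] := proj_mx H _ 1%:M; rewrite mul1mx in h1 h2.
move/submxP: h1 => [D eD].
have e : P *m (1%:M - P)^T = 0.
  rewrite {1}eD -mulmxA.
  have -> : S *m (1%:M - P)^T = ((1%:M - P) *m S^T)^T by rewrite trmx_mul trmxK.
  by rewrite h2 trmx0 mulmx0.
move: e; rewrite linearB /= trmx1 (proj_sym H) mulmxBr mulmx1 => /eqP.
by rewrite subr_eq0 => /eqP <-.
Qed.

Lemma sub_neg m (X Y : 'M[R]_(m,n)) (S : 'M[R]_n) :
  (X <= S)%MS -> (Y <= S)%MS -> (X - Y <= S)%MS.
Proof. by move=> hX hY; apply: addmx_sub => //; rewrite eqmx_opp. Qed.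

Lemma proj_fix {S P : 'M[R]_n} {m} {W : 'M_(m,n)} :
  is_orth_proj S P -> (W <= S)%MS -> W *m P = W.
Proof.
move=> H hW; have [h1 h2] := proj_mx H _ W.
apply/eqP; rewrite eq_sym -subr_eq0; apply/eqP.
by apply: (@in_perp0 _ S) => //; apply: sub_neg hW h1.
Qed.

Lemma proj_uniq {S P Q : 'M[R]_n} : is_orth_proj S P -> is_orth_proj S Q -> P = Q.
Proof.
move=> HP HQ; have [h1 h2] := proj_mx HP _ 1%:M; have [h3 h4] := proj_mx HQ _ 1%:M.
rewrite !mul1mx in h1 h2 h3 h4.
apply/eqP; rewrite -subr_eq0; apply/eqP; apply: (@in_perp0 _ S).
  exact: sub_neg h1 h3.
have -> : P - Q = (1%:M - Q) - (1%:M - P) by rewrite opprB [RHS]addrC addrA subrK.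
by rewrite mulmxBl h2 h4 subr0.
Qed.

Lemma proj_compl {S P : 'M[R]_n} : is_orth_proj S P -> is_orth_proj (orthc S) (1%:M - P).
Proof.
move=> H x; have [h1 h2] := H x; split.
  by rewrite /orthc; apply/sub_kermxP; rewrite mulmxBr mulmx1.
rewrite mulmxBr mulmx1 opprB addrC subrK.
move/submxP: h1 => [D ->].
rewrite /orthc -mulmxA; set K := kermx S^T.
have -> : S *m K^T = (K *m S^T)^T by rewrite [RHS]trmx_mul trmxK.
by rewrite /K mulmx_ker trmx0 mulmx0.
Qed.

Lemma perp_sub m p q (S1 : 'M[R]_(p,n)) (S2 : 'M[R]_(q,n)) (Y : 'M_(m,n)) :
  (S1 <= S2)%MS -> Y *m S2^T = 0 -> Y *m S1^T = 0.
Proof. by move=> /submxP[D ->] h; rewrite trmx_mul mulmxA h mul0mx. Qed.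

Lemma perp_adds m (U V : 'M[R]_n) (Y : 'M_(m,n)) :
  Y *m U^T = 0 -> Y *m V^T = 0 -> Y *m (U + V)%MS^T = 0.
Proof.
move=> hU hV; apply: (@perp_sub _ _ _ (U + V)%MS (col_mx U V) Y); first by rewrite addsmxE.
by rewrite tr_col_mx mul_mx_row hU hV row_mx0.
Qed.



Lemma key (U V A B PUV M : 'M[R]_n) :
  is_orth_proj (orthc U) A -> is_orth_proj (orthc V) B -> is_orth_proj (U + V)%MS PUV ->
  is_MP_inverse (A + B) M -> PUV = 1%:M - (2 : R) *: (B *m M *m A).
Proof.
move=> hA hB hP [h1 h2 h3 h4].
set S := A + B.
have As := proj_sym hA; have Bs := proj_sym hB.
have Ai := proj_idem hA; have Bi := proj_idem hB.
have ST : S^T = S by rewrite /S linearD /= As Bs.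
have psd : forall m (T : 'M[R]_(m,n)), T *m S = 0 -> T *m A = 0 /\ T *m B = 0.
  move=> m T hT.
  have e : (T *m A) *m (T *m A)^T + (T *m B) *m (T *m B)^T = 0.
    rewrite !trmx_mul As Bs !mulmxA -(mulmxA T A A) -(mulmxA T B B) Ai Bi.
    by rewrite -mulmxDl -mulmxDr hT mul0mx.
  split; first exact: sqr_sum0 e.
  by apply: (@sqr_sum0 _ _ (T *m B) (T *m A)); rewrite addrC.
have [SMA SMB] : S *m M *m A = A /\ S *m M *m B = B.
  have hT : (1%:M - S *m M) *m S = 0 by rewrite mulmxBl mul1mx h1 subrr.
  have [e1 e2] := psd _ _ hT.
  move: e1 e2; rewrite !mulmxBl !mul1mx => /eqP; rewrite subr_eq0 => /eqP <-.
  by move=> /eqP; rewrite subr_eq0 => /eqP <-.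
have T2S : (1%:M - M *m S) *m S = 0.
  have e : S *m (1%:M - M *m S) = 0 by rewrite mulmxBr mulmx1 mulmxA h1 subrr.
  have := congr1 trmx e; rewrite trmx_mul ST linearB /= trmx1 h4 trmx0 => ->.
  by [].
have [MSA MSB] : A *m (M *m S) = A /\ B *m (M *m S) = B.
  have [e1 e2] := psd _ _ T2S.
  move: e1 e2; rewrite !mulmxBl !mul1mx => /eqP; rewrite subr_eq0 => /eqP e1.
  move=> /eqP; rewrite subr_eq0 => /eqP e2.
  split.
    by rewrite -[A in A *m _]As -h4 -trmx_mul -e1 As.
  by rewrite -[B in B *m _]Bs -h4 -trmx_mul -e2 Bs.
have eA : A = S - B by rewrite /S addrK.
have eB : B = S - A by rewrite /S [A + B]addrC addrK.
have N1 : B *m M *m A = B - B *m M *m B.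
  by rewrite [in LHS]eA mulmxBr -[B *m M *m S]mulmxA MSB.
have N2 : B *m M *m A = A - A *m M *m A.
  by rewrite [in LHS]eB !mulmxBl SMA.
have N3 : A *m M *m B = B *m M *m A.
  by rewrite N1 [in LHS]eA !mulmxBl SMB.
have AU : A *m U^T = 0.
  by have [h _] := proj_mx hA _ 1%:M; rewrite mul1mx in h; apply/sub_kermxP.
have BV : B *m V^T = 0.
  by have [h _] := proj_mx hB _ 1%:M; rewrite mul1mx in h; apply/sub_kermxP.
set N := B *m M *m A.
have hN : is_orth_proj (orthc (U + V)%MS) ((2:R) *: N).
  move=> x; split.
    rewrite /orthc; apply/sub_kermxP; apply: perp_adds.
      by rewrite -scalemxAr -scalemxAl /N -!mulmxA AU !mulmx0 scaler0.
    by rewrite -scalemxAr -scalemxAl /N -N3 -!mulmxA BV !mulmx0 scaler0.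
  rewrite /orthc; set W := kermx _.
  have WU : W *m U^T = 0 := @perp_sub _ _ _ _ _ _ (addsmxSl U V) (mulmx_ker _).
  have WV : W *m V^T = 0 := @perp_sub _ _ _ _ _ _ (addsmxSr U V) (mulmx_ker _).
  have WA : W *m A = W by apply: (proj_fix hA); apply/sub_kermxP.
  have WB : W *m B = W by apply: (proj_fix hB); apply/sub_kermxP.
  have AW : A *m W^T = W^T by rewrite -[A in A *m _]As -trmx_mul WA.
  have BW : B *m W^T = W^T by rewrite -[B in B *m _]Bs -trmx_mul WB.
  have SMW : S *m M *m W^T = W^T by rewrite -{1}AW mulmxA SMA AW.
  have NW1 : N *m W^T = W^T - A *m M *m W^T.
    by rewrite /N N2 mulmxBl -[A *m M *m A *m _]mulmxA !AW.
  have NW2 : N *m W^T = W^T - B *m M *m W^T.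
    by rewrite /N N1 mulmxBl -[B *m M *m B *m _]mulmxA !BW.
  have NW : (2:R) *: N *m W^T = W^T.
    rewrite -scalemxAl scaler_nat mulr2n {1}NW1 NW2.
    have e : A *m M *m W^T + B *m M *m W^T = S *m M *m W^T by rewrite -!mulmxDl.
    by rewrite addrACA -opprD e SMW addrK.
  by rewrite mulmxBl -mulmxA NW subrr.
have e := proj_uniq hN (proj_compl hP).
by rewrite e opprB addrC subrK.
Qed.
End Aux.

Arguments key {R n U V A B PUV M}.
Arguments proj_uniq {R n S P Q}.
Arguments proj_compl {R n S P}.

Theorem mainTheorem4 (R : realType) (n : nat) (U V : 'M[R]_n)
  (PU PV PUV PUp PVp M1 M2 : 'M[R]_n) :
  is_orth_proj U PU -> is_orth_proj V PV -> is_orth_proj (U + V)%MS PUV ->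
  is_orth_proj (orthc U) PUp -> is_orth_proj (orthc V) PVp ->
  is_MP_inverse (PUp + PVp) M1 ->
  is_MP_inverse ((2 : R)%:M - PU - PV) M2 ->
  PUV = 1%:M - (2 : R) *: (PVp *m M1 *m PUp) /\
  PUV = 1%:M - (2 : R) *: ((1%:M - PV) *m M2 *m (1%:M - PU)).
Proof.
move=> hU hV hP hUp hVp hM1 hM2; split; first exact: (key hUp hVp hP hM1).
have e1 : PUp = 1%:M - PU := proj_uniq hUp (proj_compl hU).
have e2 : PVp = 1%:M - PV := proj_uniq hVp (proj_compl hV).
have E : (2 : R)%:M - PU - PV = (1%:M - PU) + (1%:M - PV) :> 'M[R]_n.
  have -> : (2 : R)%:M = 1%:M + 1%:M :> 'M[R]_n by rewrite -raddfD.
  by rewrite -addrA addrACA.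
rewrite E -e1 -e2 in hM2.
rewrite -e1 -e2; exact: (key hUp hVp hP hM2).
Qed.
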